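(* Let $A$ be a symmetric finite collection of points of $[0,1]^2$, and let $x=(x_1,x_2)$ be an average fixed point of $A$. Then $x_1=x_2$.
   Context: A collection (multiset) $A=(a^k)_{k\in[n]}$ of points of $[0,1]^2$ is symmetric if for all $x_1,x_2$, $|\{k:a^k=(x_1,x_2)\}|=|\{k:a^k=(x_2,x_1)\}|$. For a finite nonempty multiset $B$, $\operatorname{avg}(B)$ is its arithmetic mean (with multiplicity). For $x\in[0,1]^2$: $A_{<,<}(x)=\{a\in A:a_1<x_1,a_2<x_2\}$ and $A_{\le,\le}(x)=\{a\in A:a_1\le x_1,a_2\le x_2\}$. A point $x$ is an average fixed point of $A$ if there exists a sub-multiset $B\subseteq A_{\le,\le}(x)\setminus A_{<,<}(x)$ such that $\operatorname{avg}\big((A\setminus A_{\le,\le}(x))\cup B\big)=x$. *)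

(* Defs.v *)
From HB Require Import structures.
From mathcomp Require Import all_boot all_order all_algebra.
Set Implicit Arguments. Unset Strict Implicit. Unset Printing Implicit Defensive.
Import Order.TTheory GRing.Theory Num.Theory.
Local Open Scope ring_scope.

(* A finite multiset of points of R^2 is represented as an indexed family
   a : 'I_n -> R * R (indices carry the multiplicity).  Sub-multisets are
   represented by sets of indices. *)

Definition in_unit_square (R : realFieldType) (p : R * R) : Prop :=
  0 <= p.1 <= 1 /\ 0 <= p.2 <= 1.

Definition symmetric_family (R : realFieldType) (n : nat) (a : 'I_n -> R * R) : Prop :=
  forall x1 x2 : R,
    #|[set k | a k == (x1, x2)]| = #|[set k | a k == (x2, x1)]|.

Definition lt_lt (R : realFieldType) (x p : R * R) : bool := (p.1 < x.1) && (p.2 < x.2).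
Definition le_le (R : realFieldType) (x p : R * R) : bool := (p.1 <= x.1) && (p.2 <= x.2).

Definition avg_idx (R : realFieldType) (n : nat) (a : 'I_n -> R * R) (T : {set 'I_n}) : R * R :=
  ((\sum_(k in T) (a k).1) / #|T|%:R, (\sum_(k in T) (a k).2) / #|T|%:R).

(* x is an average fixed point of A: there is a sub-multiset B of
   A_{<=,<=}(x) \ A_{<,<}(x) such that (A \ A_{<=,<=}(x)) ∪ B is nonempty
   (so its average is defined) and has average x. *)
Definition average_fixed_point (R : realFieldType) (n : nat) (a : 'I_n -> R * R)
    (x : R * R) : Prop :=
  in_unit_square x /\
  exists B : {set 'I_n},
    (forall k, k \in B -> le_le x (a k) && ~~ lt_lt x (a k)) /\
    let T := [set k | ~~ le_le x (a k)] :|: B in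
    T != set0 /\ avg_idx a T = x.

(* Main.v *)
Require Import Defs.
From HB Require Import structures.
From mathcomp Require Import all_boot all_order all_algebra.
Import Order.TTheory GRing.Theory Num.Theory.
Local Open Scope ring_scope.
From mathcomp Require Import ring lra.
Definition swp {R : Type} (p : R * R) : R * R := (p.2, p.1).
Lemma cnt (T : eqType) n (a : 'I_n -> T) v :
  count_mem v [seq a k | k <- enum 'I_n] = #|[set k | a k == v]|.
Proof.
rewrite count_map cardsE cardE /enum_mem size_filter filter_predT; apply: eq_count => k /=.
by [].
Qed.
Lemma sym_sum (R : realFieldType) n (a : 'I_n -> R * R) (hsym : symmetric_family a)
  (phi : R * R -> R) :
  \sum_(k < n) phi (a k) = \sum_(k < n) phi (swp (a k)).
Proof.
set r := [seq a k | k <- enum 'I_n].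
have P : perm_eq r (map (@swp R) r).
  apply/allP => v _ /=; apply/eqP.
  rewrite count_map cnt.
  have -> : count (preim (@swp R) (pred1 v)) r = count_mem (swp v) r.
    apply: eq_count => p /=; apply/eqP/eqP => [<-|->]; first by case: p.
    by case: v.
  by rewrite cnt; case: v => v1 v2; rewrite hsym.
have E1 : \sum_(k < n) phi (a k) = \sum_(p <- r) phi p by rewrite big_map big_enum.
have E2 : \sum_(k < n) phi (swp (a k)) = \sum_(p <- map (@swp R) r) phi p.
  by rewrite big_map big_map big_enum.
by rewrite E1 E2; apply: perm_big.
Qed.
Lemma core (R : realFieldType) n (a : 'I_n -> R * R) (hsym : symmetric_family a)
  (x1 x2 : R) (hlt : x1 < x2) (T : {set 'I_n})
  (hT : forall k, k \in T -> ~~ (((a k).1 <= x1) && ((a k).2 <= x2))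
        || [&& (a k).1 <= x1, (a k).2 <= x2 & (x1 <= (a k).1) || (x2 <= (a k).2)])
  (hT2 : forall k, ~~ (((a k).1 <= x1) && ((a k).2 <= x2)) -> k \in T)
  (hne : T != set0)
  (s1 : \sum_(k in T) (a k).1 = #|T|%:R * x1)
  (s2 : \sum_(k in T) (a k).2 = #|T|%:R * x2) : False.
Proof.
pose U (p : R * R) := ~~ ((p.1 <= x1) && (p.2 <= x2)).
pose V (p : R * R) := U p || [&& p.1 <= x1, p.2 <= x2 & (x1 <= p.1) || (x2 <= p.2)].
pose chi (p : R * R) := if U p && (p.2 < p.1) then p.1 - p.2 else 0.
pose psi (p : R * R) := if V p && (p.1 < p.2) then p.2 - p.1 else 0.
have hD : \sum_(k in T) ((a k).1 - (a k).2) = #|T|%:R * (x1 - x2).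
  by rewrite sumrB s1 s2 mulrBr.
have Tpos : (0 < #|T|)%N by rewrite card_gt0.
have neg : #|T|%:R * (x1 - x2) < 0.
  rewrite pmulr_rlt0 ?ltr0n // subr_lt0 //.
have step1 : \sum_(k in T) (chi (a k) - psi (a k)) <= \sum_(k in T) ((a k).1 - (a k).2).
  apply: ler_sum => k kT; have := hT k kT; rewrite /chi /psi -/(U (a k)) -/(V (a k)).
  move=> Vk; rewrite Vk /=.
  case: (ltgtP (a k).2 (a k).1) => h; rewrite ?andbF ?andbT; try case: (U (a k)); lra.
have step2 : \sum_(k < n) (chi (a k) - psi (a k)) <= \sum_(k in T) (chi (a k) - psi (a k)).
  rewrite (bigID (mem T)) /= -[X in _ <= X]addr0 lerD2l.
  apply: sumr_le0 => k kT.
  have : ~~ U (a k) by apply: contra kT => /hT2.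
  rewrite /chi /psi => /negbTE ->; rewrite /=; case: ifP => [/andP[_ h]|_]; lra.
have step3 : \sum_(k < n) psi (a k) <= \sum_(k < n) chi (a k).
  rewrite (@sym_sum _ _ _ hsym chi); apply: ler_sum => k _.
  rewrite /psi /chi /swp /=.
  case: (a k) => p1 p2 /=.
  have key : V (p1, p2) -> (x1 <= p1) || (x2 <= p2).
    rewrite /V /U /= negb_and -!ltNge.
    case/orP => [/orP[h|h]|/and3P[_ _ ->]] //.
      by rewrite ltW.
    by rewrite orbC ltW.
  case: ifP => [/andP[hV h]|_]; last first.
    by case: ifP => [/andP[_ h]|_]; lra.
  have hU : U (p2, p1).
    rewrite /U /= negb_and -!ltNge.
    by move/orP: (key hV) => [h1|h1]; apply/orP; left; lra.
  by rewrite hU h /=.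
have := le_trans step2 step1; rewrite sumrB hD => H.
lra.
Qed.
Lemma sym_swp (R : realFieldType) n (a : 'I_n -> R * R) (hsym : symmetric_family a) :
  symmetric_family (fun k => swp (a k)).
Proof.
move=> x1 x2.
have E : forall y1 y2, [set k | swp (a k) == (y1, y2)] = [set k | a k == (y2, y1)].
  move=> y1 y2; apply/setP => k; rewrite !inE /swp.
  by case: (a k) => p1 p2 /=; rewrite !xpair_eqE andbC.
by rewrite !E hsym.
Qed.

Theorem corollary1 (R : realFieldType) (n : nat) (a : 'I_n -> R * R)
  (hA : forall k, in_unit_square (a k))
  (hsym : symmetric_family a)
  (x : R * R) (hx : average_fixed_point a x) :
  x.1 = x.2.
Proof.
case: x hx => x1 x2 [_ [B [hB]]] /=.
set T := _ :|: B => [[hne havg]].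
have Tpos : (0 < #|T|)%N by rewrite card_gt0.
have Tn0 : (#|T|%:R : R) != 0 by rewrite pnatr_eq0 -lt0n.
case: havg => /(congr1 (fun y => y * #|T|%:R)) h1 /(congr1 (fun y => y * #|T|%:R)) h2.
rewrite divfK // in h1; rewrite divfK // in h2.
rewrite mulrC in h1; rewrite mulrC in h2.
have inT : forall k, (k \in T) = ~~ le_le (x1, x2) (a k) || (k \in B).
  by move=> k; rewrite !inE.
case: (ltgtP x1 x2) => // hlt; exfalso.
- apply: (@core R n a hsym x1 x2 hlt T) => //.
  + move=> k; rewrite inT; case/orP => [->//|/hB]; rewrite /le_le /lt_lt /= => /andP[/andP[-> ->]].
    by rewrite negb_and -!leNgt.
  + by move=> k hk; rewrite inT /le_le /= hk.
- have := (@core R n (fun k => swp (a k)) (@sym_swp _ _ _ hsym) x2 x1 hlt T). move=> H; apply: H => //.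
  + move=> k; rewrite inT /swp /=; case/orP => [|/hB]; rewrite /le_le /lt_lt /=.
      by rewrite andbC => ->.
    case/andP => /andP[-> ->]; rewrite /= negb_and -!leNgt /=.
    by rewrite orbC.
  + by move=> k hk; rewrite inT /le_le /= andbC hk.
Qed.
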